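(* Let $\mathbb{R}^n$ be endowed with the $\ell_1$ norm and $\mathbb{R}^m$ with an arbitrary norm $\|\cdot\|$. Suppose $A\in\mathbb{R}^{m\times n}$ has at least two different columns and $f:\mathbb{R}^m\to\mathbb{R}\cup\{\infty\}$ is a differentiable convex function that is $L_f$-smooth and $\mu_f$-strongly convex on $\mathrm{conv}(A)$. Then \[ L_{f,A}\le \frac{L_f\cdot \mathrm{diam}(A)^2}{4},\qquad \mu_{f,A}\ge\frac{\mu_f\cdot\Phi(A)^2}{4}, \] and in particular $\dfrac{L_{f,A}}{\mu_{f,A}}\le\dfrac{L_f}{\mu_f}\cdot\dfrac{\mathrm{diam}(A)^2}{\Phi(A)^2}$.
   Context: A differentiable convex $f$ is $L_f$-smooth (with $L_f>0$) on $S\subseteq\mathrm{dom}(f)$ if $f(v)\le f(u)+\langle\nabla f(u),v-u\rangle+\frac{L_f}{2}\|v-u\|^2$ for all $u,v\in S$, and $\mu_f$-strongly convex (with $\mu_f\ge0$) on $S$ if $f(v)\ge f(u)+\langle\nabla f(u),v-u\rangle+\frac{\mu_f}{2}\|v-u\|^2$ for all $u,v\in S$. $\Delta_{n-1}=\{x\in\mathbb{R}^n_+:\sum_ix_i=1\}$; $A$ is identified with the set of its columns; $\mathrm{conv}(A)=\{Ax:x\in\Delta_{n-1}\}$; for $u\in\mathrm{conv}(A)$, $Z(u)=\{z\in\Delta_{n-1}:Az=u\}$ and $\mathrm{dist}(x,Z(u))=\min_{z\in Z(u)}\|x-z\|_1$. The relative constants are \[ L_{f,A}=\sup_{u\in\mathrm{conv}(A),\,x\in\Delta_{n-1}\setminus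 Z(u)}\frac{2(f(Ax)-f(u)-\langle\nabla f(u),Ax-u\rangle)}{\mathrm{dist}(x,Z(u))^2}, \] and $\mu_{f,A}$ the same expression with $\inf$ instead of $\sup$. $\mathrm{diam}(A)=\sup_{u,w\in A}\|u-w\|$, and the facial distance is $\Phi(A)=\min\{\mathrm{dist}(F,\mathrm{conv}(A\setminus F)):F\text{ a face of }\mathrm{conv}(A),\ \emptyset\ne F\ne\mathrm{conv}(A)\}$, with $A\setminus F$ the columns of $A$ not in $F$ and $\mathrm{dist}(F,G)=\inf_{u\in F,w\in G}\|u-w\|$. *)

(* Defs.v *)
From HB Require Import structures.
From mathcomp Require Import all_boot all_order all_algebra.
From mathcomp Require Import all_classical all_reals all_analysis.
Set Implicit Arguments. Unset Strict Implicit. Unset Printing Implicit Defensive.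
Import Order.TTheory GRing.Theory Num.Theory.
Import numFieldNormedType.Exports.
Local Open Scope classical_set_scope.
Local Open Scope ring_scope.

Section Defs.
Variable R : realType.

Definition simplex (n : nat) : set 'cV[R]_n :=
  [set x | (forall i, 0 <= x i 0) /\ \sum_i x i 0 = 1].

Definition l1 (n : nat) (x : 'cV[R]_n) : R := \sum_i `|x i 0|.

Definition conv_cols (m n : nat) (A : 'M[R]_(m, n)) : set 'cV[R]_m :=
  [set A *m x | x in (@simplex n)].

Definition Zset (m n : nat) (A : 'M[R]_(m, n)) (u : 'cV[R]_m) : set 'cV[R]_n :=
  [set z | (@simplex n) z /\ A *m z = u].

Definition distZ (m n : nat) (A : 'M[R]_(m, n)) (x : 'cV[R]_n) (u : 'cV[R]_m) : R :=
  inf [set l1 (x - z) | z in Zset A u].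

Definition is_norm (m : nat) (N : 'cV[R]_m -> R) : Prop :=
  [/\ forall x y, N (x + y) <= N x + N y,
      forall (a : R) x, N (a *: x) = `|a| * N x
    & forall x, N x = 0 -> x = 0].

Definition fr (m : nat) (f : 'cV[R]_m -> \bar R) : 'cV[R]_m -> R := fun x => fine (f x).

Definition convex_ext (m : nat) (f : 'cV[R]_m -> \bar R) : Prop :=
  (forall x, f x != -oo%E) /\
  (forall x y : 'cV[R]_m, forall t : R, 0 <= t <= 1 ->
     (f (t *: x + (1 - t) *: y)%R <= t%:E * f x + (1 - t)%:E * f y)%E).

(* f is finite near, and differentiable at, every point of S;
   <grad f(u), w> is then the differential  'd (fr f) u w *)
Definition differentiable_on (m : nat) (f : 'cV[R]_m -> \bar R) (S : set 'cV[R]_m) : Prop :=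
  forall u, S u -> (\forall x \near u, f x \is a fin_num) /\ differentiable (fr f) u.

Definition grad_pair (m : nat) (f : 'cV[R]_m -> \bar R) (u w : 'cV[R]_m) : R :=
  'd (fr f) u w.

Definition smooth_on (m : nat) (N : 'cV[R]_m -> R) (f : 'cV[R]_m -> \bar R)
  (S : set 'cV[R]_m) (L : R) : Prop :=
  forall u v, S u -> S v ->
    fr f v <= fr f u + grad_pair f u (v - u) + L / 2 * N (v - u) ^+ 2.

Definition strongly_convex_on (m : nat) (N : 'cV[R]_m -> R) (f : 'cV[R]_m -> \bar R)
  (S : set 'cV[R]_m) (mu : R) : Prop :=
  forall u v, S u -> S v ->
    fr f v >= fr f u + grad_pair f u (v - u) + mu / 2 * N (v - u) ^+ 2.

Definition rel_ratios (m n : nat) (A : 'M[R]_(m, n)) (f : 'cV[R]_m -> \bar R) : set (\bar R) :=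
  [set r | exists u x, [/\ conv_cols A u, (@simplex n) x, ~ Zset A u x &
     r = (2 * (fr f (A *m x) - fr f u - grad_pair f u (A *m x - u))
            / distZ A x u ^+ 2)%:E]].

Definition LfA (m n : nat) (A : 'M[R]_(m, n)) (f : 'cV[R]_m -> \bar R) : \bar R :=
  ereal_sup (rel_ratios A f).

Definition mufA (m n : nat) (A : 'M[R]_(m, n)) (f : 'cV[R]_m -> \bar R) : \bar R :=
  ereal_inf (rel_ratios A f).

Definition diam (m n : nat) (N : 'cV[R]_m -> R) (A : 'M[R]_(m, n)) : R :=
  \big[Num.max/0]_(i < n) \big[Num.max/0]_(j < n) N (col i A - col j A).

Definition convex_subset (m : nat) (C : set 'cV[R]_m) : Prop :=
  forall x y (t : R), C x -> C y -> 0 <= t <= 1 -> C (t *: x + (1 - t) *: y).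

Definition is_face (m : nat) (C F : set 'cV[R]_m) : Prop :=
  [/\ F `<=` C, convex_subset F &
      forall x y (t : R), C x -> C y -> 0 < t < 1 ->
        F (t *: x + (1 - t) *: y) -> F x /\ F y].

Definition conv_out (m n : nat) (A : 'M[R]_(m, n)) (F : set 'cV[R]_m) : set 'cV[R]_m :=
  [set A *m x | x in [set x | (@simplex n) x /\ forall j, F (col j A) -> x j 0 = 0]].

Definition set_dist (m : nat) (N : 'cV[R]_m -> R) (F G : set 'cV[R]_m) : R :=
  inf [set r | exists u w, [/\ F u, G w & r = N (u - w)]].

Definition facial_dist (m n : nat) (N : 'cV[R]_m -> R) (A : 'M[R]_(m, n)) : R :=
  inf [set r | exists F, [/\ is_face (conv_cols A) F, F <> set0, F <> conv_cols A &
                            r = set_dist N F (conv_out A F)]].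

End Defs.
Arguments simplex {R} n.

(* Main.v *)
Require Import Defs.
From HB Require Import structures.
From mathcomp Require Import all_boot all_order all_algebra.
From mathcomp Require Import all_classical all_reals all_analysis.
From mathcomp Require Import ring lra.
Set Implicit Arguments. Unset Strict Implicit. Unset Printing Implicit Defensive.
Import Order.TTheory GRing.Theory Num.Theory.
Import numFieldNormedType.Exports.
Local Open Scope classical_set_scope.
Local Open Scope ring_scope.

Section Basic.
Variable R : realType.

Lemma mulmx_sum_col m n (A : 'M[R]_(m, n)) (x : 'cV[R]_n) :
  A *m x = \sum_j x j 0 *: col j A.
Proof.
apply/matrixP => i k; rewrite !mxE summxE; apply: eq_bigr => j _.
by rewrite !mxE (ord1 k) mulrC.
Qed.

Lemma maxcases (a : R) :
  (a <= 0 /\ Num.max a 0 = 0 /\ Num.max (- a) 0 = - a) \/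
  (0 < a /\ Num.max a 0 = a /\ Num.max (- a) 0 = 0).
Proof.
case: (boolP (a <= 0)) => h.
  by left; rewrite (max_r h) max_l // oppr_ge0.
have h' : 0 < a by rewrite ltNge.
by right; rewrite max_l ?ltW // max_r // oppr_le0 ltW.
Qed.
Lemma posp_negp (a : R) : Num.max a 0 - Num.max (- a) 0 = a.
Proof. by case: (maxcases a) => [[h [-> ->]]|[h [-> ->]]]; rewrite ?opprK ?add0r ?subr0. Qed.
Lemma posp_negp_abs (a : R) : Num.max a 0 + Num.max (- a) 0 = `|a|.
Proof. case: (maxcases a) => [[h [-> ->]]|[h [-> ->]]]. by rewrite add0r ler0_norm. by rewrite addr0 gtr0_norm. Qed.

Definition l1' n (x : 'cV[R]_n) := \sum_i `|x i 0|.

Lemma l1_ge0 n (x : 'cV[R]_n) : 0 <= l1 x.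
Proof. by rewrite /l1; apply: sumr_ge0 => i _. Qed.

Lemma l1_eq0 n (x : 'cV[R]_n) : l1 x = 0 -> x = 0.
Proof.
move=> /eqP; rewrite /l1 psumr_eq0 // => /allP H.
apply/matrixP => i k; rewrite (ord1 k) mxE; apply/eqP; rewrite -normr_eq0.
by apply: (implyP (H i _)) => //; rewrite mem_index_enum.
Qed.

Lemma decomp n (d : 'cV[R]_n) : \sum_i d i 0 = 0 -> d != 0 ->
  exists (lam : R) (p q : 'cV[R]_n),
   [/\ 0 < lam, simplex n p, simplex n q, forall i, p i 0 = 0 \/ q i 0 = 0 &
       d = lam *: (p - q) /\ l1 d = 2 * lam].
Proof.
move=> s0 dn0.
set lam := l1 d / 2.
have l1pos : 0 < l1 d.
  rewrite lt_neqAle l1_ge0 andbT eq_sym; apply/negP => /eqP /l1_eq0 h.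
  by rewrite h eqxx in dn0.
have lam0 : 0 < lam by rewrite divr_gt0.
pose p := \col_i (Num.max (d i 0) 0 / lam).
pose q := \col_i (Num.max (- d i 0) 0 / lam).
have sP : \sum_i Num.max (d i 0) 0 = lam.
  have h1 : \sum_i Num.max (d i 0) 0 - \sum_i Num.max (- d i 0) 0 = 0.
    by rewrite -sumrB -[X in _ = X]s0; apply: eq_bigr => i _; rewrite posp_negp.
  have h2 : \sum_i Num.max (d i 0) 0 + \sum_i Num.max (- d i 0) 0 = l1 d.
    rewrite /l1 -big_split; apply: eq_bigr => i _ /=; rewrite posp_negp_abs. done.
  rewrite /lam -h2; move/eqP: h1; rewrite subr_eq0 => /eqP ->; by field.
have sQ : \sum_i Num.max (- d i 0) 0 = lam.
  have h1 : \sum_i Num.max (d i 0) 0 - \sum_i Num.max (- d i 0) 0 = 0.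
    by rewrite -sumrB -[X in _ = X]s0; apply: eq_bigr => i _; rewrite posp_negp.
  by move/eqP: h1; rewrite sP subr_eq0 => /eqP <-.
exists lam, p, q; split => //.
- split; first by move=> i; rewrite mxE divr_ge0 // ?le_max ?lexx ?orbT // ltW.
  by rewrite /p; under eq_bigr do rewrite mxE; rewrite -mulr_suml sP divff // gt_eqF.
- split; first by move=> i; rewrite mxE divr_ge0 // ?le_max ?lexx ?orbT // ltW.
  by rewrite /q; under eq_bigr do rewrite mxE; rewrite -mulr_suml sQ divff // gt_eqF.
- move=> i; rewrite !mxE; case: (maxcases (d i 0)) => [[h [-> ->]]|[h [-> ->]]].
    by left; rewrite mul0r.
  by right; rewrite mul0r.
- split; last by rewrite /lam; field.
  apply/matrixP => i k; by rewrite (ord1 k) !mxE -mulrBl posp_negp mulrCA divff ?mulr1 // gt_eqF.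
Qed.

End Basic.


Section Norm.
Variable R : realType.
Variable m : nat.
Variable N : 'cV[R]_m -> R.
Hypothesis HN : is_norm N.

Lemma NZ a x : N (a *: x) = `|a| * N x.
Proof. by case: HN. Qed.
Lemma NT x y : N (x + y) <= N x + N y.
Proof. by case: HN. Qed.
Lemma N0 : N 0 = 0.
Proof. by rewrite -(scale0r 0) NZ normr0 mul0r. Qed.
Lemma NN x : N (- x) = N x.
Proof. by rewrite -scaleN1r NZ normrN normr1 mul1r. Qed.
Lemma N_ge0 x : 0 <= N x.
Proof.
have := NT x (- x); rewrite subrr N0 NN => h.
by rewrite -(@pmulr_rge0 _ 2) // mulr2n mulrDl mul1r.
Qed.
Lemma NB x y : N (x - y) = N (y - x).
Proof. by rewrite -NN opprB. Qed.
Lemma N_sum I (r : seq I) (P : pred I) (F : I -> 'cV[R]_m) :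
  N (\sum_(i <- r | P i) F i) <= \sum_(i <- r | P i) N (F i).
Proof.
elim/big_rec2: _ => [|i y1 y2 _ h]; first by rewrite N0.
by apply: le_trans (NT _ _) _; rewrite lerD2l.
Qed.

Variable n : nat.
Variable A : 'M[R]_(m, n).

Lemma diam_ge0 : 0 <= diam N A.
Proof. by rewrite /diam; apply/bigmax_geP; left. Qed.

Lemma col_le_diam i j : N (col i A - col j A) <= diam N A.
Proof.
rewrite /diam; apply/bigmax_geP; right; exists i => //.
by apply/bigmax_geP; right; exists j.
Qed.

Lemma ApAq_diam p q : simplex n p -> simplex n q ->
  N (A *m p - A *m q) <= diam N A.
Proof.
move=> [p0 p1] [q0 q1].
have -> : A *m p - A *m q =
   \sum_j \sum_k (p j 0 * q k 0) *: (col j A - col k A).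
  rewrite !mulmx_sum_col; symmetry.
  rewrite (eq_bigr (fun j => \sum_k (p j 0 * q k 0) *: col j A - \sum_k (p j 0 * q k 0) *: col k A)); last first.
    by move=> j _; rewrite -sumrB; apply: eq_bigr => k _; rewrite scalerBr.
  rewrite sumrB; congr (_ - _).
    by apply: eq_bigr => j _; rewrite -scaler_suml -mulr_sumr q1 mulr1.
  rewrite exchange_big /=; apply: eq_bigr => k _.
  by rewrite -scaler_suml -mulr_suml p1 mul1r.
apply: le_trans (N_sum _ _ _) _.
apply: (@le_trans _ _ (\sum_j \sum_k p j 0 * q k 0 * diam N A)).
  apply: ler_sum => j _; apply: le_trans (N_sum _ _ _) _.
  apply: ler_sum => k _; rewrite NZ ger0_norm ?mulr_ge0 //.
  by apply: ler_wpM2l; [rewrite mulr_ge0 | exact: col_le_diam].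
under eq_bigr do rewrite -mulr_suml -mulr_sumr q1 mulr1.
by rewrite -mulr_suml p1 mul1r.
Qed.

Lemma Ad_bound (d : 'cV[R]_n) : \sum_i d i 0 = 0 -> N (A *m d) <= l1 d * diam N A / 2.
Proof.
move=> s0; case: (eqVneq d 0) => [->|dn0].
  rewrite mulmx0 N0; apply: mulr_ge0; last by [].
  by apply: mulr_ge0; [apply: l1_ge0 | apply: diam_ge0].
have [lam [p [q [lam0 sp sq _ [-> ->]]]]] := decomp s0 dn0.
rewrite -scalemxAr NZ mulmxBr gtr0_norm //.
have := ApAq_diam sp sq => h.
have -> : 2 * lam * diam N A / 2 = lam * diam N A by field.
by apply: ler_wpM2l => //; apply: ltW.
Qed.

End Norm.


Section Compact.
Variable R : realType.
Variable n : nat.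

Lemma lip_cont (f : 'rV[R]_n -> R) (C : R) :
  0 < C -> (forall a b, `|f a - f b| <= C * `|a - b|) -> continuous f.
Proof.
move=> C0 Hf x s /= /(nbhs_ballP (f x)) [e /= e0 es].
apply/nbhs_ballP; exists (e / C); first by rewrite /= divr_gt0.
move=> y /= Hy; apply: es.
move: Hy; rewrite -!ball_normE /=.
move=> H; rewrite (le_lt_trans (Hf _ _)) // -ltr_pdivlMl // mulrC //.
Qed.

Lemma coord_le_norm (r : 'rV[R]_n) i : `|r 0 i| <= `|r|.
Proof.
rewrite [leRHS]/Num.norm /= mx_normrE.
by apply/bigmax_geP; right; exists (0, i).
Qed.

Lemma lin_cont (c : 'I_n -> R) : continuous (fun r : 'rV[R]_n => \sum_i c i * r 0 i).
Proof.
apply: (@lip_cont _ (\sum_i `|c i| + 1)).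
  by rewrite ltr_wpDl ?sumr_ge0.
move=> a b; rewrite -sumrB.
apply: (le_trans (ler_norm_sum _ _ _)). 
rewrite mulrDl mul1r -[leLHS]addr0; apply: lerD => //.
rewrite mulr_suml; apply: ler_sum => i _.
rewrite -mulrBr normrM; apply: ler_wpM2l => //.
have -> : a 0 i - b 0 i = (a - b) 0 i by rewrite !mxE.
exact: coord_le_norm.
Qed.

Lemma compact_min (K : set 'rV[R]_n) (B : R) (f : 'rV[R]_n -> R) :
  K !=set0 -> closed K -> (forall r, K r -> forall i, `|r 0 i| <= B) ->
  continuous f -> exists2 r, K r & forall r', K r' -> f r <= f r'.
Proof.
move=> K0 Kc Kb fc.
have cK : compact K.
  apply: bounded_closed_compact => //.
  rewrite /bounded_near.
  apply: filterS (@nbhs_pinfty_ge R (Num.max B 0) (num_real _)) => M hM r Kr /=.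
  rewrite [leLHS]/Num.norm /= mx_normrE.
  apply/bigmax_leP; split => /=.
    by apply: le_trans hM; rewrite le_max lexx orbT.
  move=> [i j] _ /=; rewrite (ord1 i); apply: le_trans (Kb _ Kr j) _.
  by apply: le_trans hM; rewrite le_max lexx.
have [r Kr H] := compact_EVT_min K0 cK (@continuous_subspaceT _ _ K f fc).
exists r; first by rewrite inE in Kr.
by move=> r' Kr'; apply: H; rewrite inE.
Qed.

End Compact.

Section Closed.
Variable R : realType.
Variable n : nat.

Lemma closed_lin_ge (c : 'I_n -> R) b :
  closed [set r : 'rV[R]_n | b <= \sum_i c i * r 0 i].
Proof.
apply: (@preimage_closed _ _ (fun r : 'rV[R]_n => \sum_i c i * r 0 i) [set x | b <= x]).
  by move=> x _; apply: lin_cont.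
exact: closed_ge.
Qed.

Lemma closed_lin_eq (c : 'I_n -> R) b :
  closed [set r : 'rV[R]_n | \sum_i c i * r 0 i = b].
Proof.
apply: (@preimage_closed _ _ (fun r : 'rV[R]_n => \sum_i c i * r 0 i) [set x | x = b]).
  by move=> x _; apply: lin_cont.
exact: closed_eq.
Qed.

Lemma coord_lin (r : 'rV[R]_n) i : r 0 i = \sum_j (if j == i then 1 else 0) * r 0 j.
Proof.
rewrite (bigD1 i) //= eqxx mul1r big1 ?addr0 // => j /negbTE ->; by rewrite mul0r.
Qed.

Lemma closed_coord_ge i :
  closed [set r : 'rV[R]_n | 0 <= r 0 i].
Proof.
have -> : [set r : 'rV[R]_n | 0 <= r 0 i] = [set r | 0 <= \sum_j (if j == i then 1 else 0) * r 0 j].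
  by apply/seteqP; split => r /=; rewrite -coord_lin.
exact: closed_lin_ge.
Qed.

Lemma closed_coord_le i :
  closed [set r : 'rV[R]_n | r 0 i <= 0].
Proof.
have -> : [set r : 'rV[R]_n | r 0 i <= 0] = [set r | 0 <= \sum_j (if j == i then -1 else 0) * r 0 j]; last exact: closed_lin_ge.
apply/seteqP; split => r /=.
  rewrite (bigD1 i) //= eqxx big1 ?addr0 ?mulN1r ?oppr_ge0 // => j /negbTE ->; by rewrite mul0r.
rewrite (bigD1 i) //= eqxx big1 ?addr0 ?mulN1r ?oppr_ge0 // => j /negbTE ->; by rewrite mul0r.
Qed.

End Closed.

Section Zmin.
Variable R : realType.
Variables m n : nat.
Variable A : 'M[R]_(m, n).

Lemma Zset_closed u : closed [set r : 'rV[R]_n | Zset A u r^T].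
Proof.
have -> : [set r : 'rV[R]_n | Zset A u r^T] =
  (\bigcap_(i in setT) [set r : 'rV[R]_n | 0 <= r 0 i]) `&`
  [set r | \sum_i 1 * r 0 i = 1] `&`
  \bigcap_(k in setT) [set r | \sum_i A k i * r 0 i = u k 0]; last first.
  apply: closedI; first apply: closedI.
  - by apply: closed_bigI => i _; apply: closed_coord_ge.
  - exact: closed_lin_eq.
  - by apply: closed_bigI => k _; apply: closed_lin_eq.
apply/seteqP; split => r /=.
  move=> [[r0 r1] Ar]; split; first split.
  - by move=> i _; have := r0 i; rewrite mxE.
  - by rewrite -[RHS]r1; apply: eq_bigr => i _; rewrite mxE mul1r.
  - move=> k _; rewrite -Ar mxE; apply: eq_bigr => i _; by rewrite mxE.
move=> [[r0 r1] Ar]; split; first split.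
- by move=> i; rewrite mxE; apply: r0.
- by rewrite -[RHS]r1; apply: eq_bigr => i _; rewrite mxE mul1r.
- apply/matrixP => k l; rewrite (ord1 l) -(Ar k I) mxE; apply: eq_bigr => i _; by rewrite mxE.
Qed.

Lemma simplex_le1 (z : 'cV[R]_n) i : simplex n z -> 0 <= z i 0 <= 1.
Proof.
move=> [z0 z1]; rewrite z0 /= -z1 (bigD1 i) //= lerDl sumr_ge0 // => j _; exact: z0.
Qed.

Lemma Zmin u (x : 'cV[R]_n) : conv_cols A u ->
  exists2 z, Zset A u z & forall z', Zset A u z' -> l1 (x - z) <= l1 (x - z').
Proof.
move=> [z0 sz0 Az0].
have K0 : [set r : 'rV[R]_n | Zset A u r^T] !=set0.
  by exists z0^T; rewrite /= trmxK.
have Kb : forall r, [set r : 'rV[R]_n | Zset A u r^T] r -> forall i, `|r 0 i| <= 1.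
  move=> r' [sr _] i; have := simplex_le1 i sr; rewrite mxE => /andP [a b].
  by rewrite ger0_norm.
have fc : continuous (fun r : 'rV[R]_n => l1 (x - r^T)).
  apply: (@lip_cont _ _ _ (n%:R + 1)); first by rewrite ltr_wpDl ?ler0n.
  move=> a b; rewrite /l1 -sumrB.
  apply: (le_trans (ler_norm_sum _ _ _)).
  rewrite mulrDl mul1r -[leLHS]addr0; apply: lerD => //.
  apply: (@le_trans _ _ (\sum_(i < n) `|a - b|)); last by rewrite sumr_const card_ord mulr_natl.
  apply: ler_sum => i _; apply: le_trans (ler_dist_dist _ _) _.
  rewrite !mxE (_ : x i 0 - a 0 i - (x i 0 - b 0 i) = - (a - b) 0 i); last by rewrite !mxE; ring.
  rewrite normrN; exact: coord_le_norm.
have [r Kr H] := compact_min K0 (Zset_closed (u:=u)) Kb fc.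
exists r^T => // z' Zz'; have := H z'^T; rewrite trmxK; apply; by rewrite /= trmxK.
Qed.

End Zmin.


Section Inf.
Variable R : realType.
Lemma inf_le_ge0 (S : set R) r : (forall s, S s -> 0 <= s) -> S r -> inf S <= r.
Proof. by move=> H Sr; apply: (ge_inf (ex_intro _ 0 H)). Qed.
Lemma inf_ge0 (S : set R) : (forall s, S s -> 0 <= s) -> 0 <= inf S.
Proof.
move=> H; case: (pselect (S !=set0)) => [ne|e]; first by apply: lb_le_inf.
have -> : S = set0 by apply/seteqP; split => s Ss //; exfalso; apply: e; exists s.
by rewrite inf0.
Qed.
End Inf.

Section Conv.
Variable R : realType.
Variables m n : nat.
Variable A : 'M[R]_(m, n).
Local Notation conv := (conv_cols A).

Lemma conv_comb3 a b c (al be ga : R) : conv a -> conv b -> conv c ->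
  0 <= al -> 0 <= be -> 0 <= ga -> al + be + ga = 1 ->
  conv (al *: a + be *: b + ga *: c).
Proof.
move=> [pa [pa0 pa1] <-] [pb [pb0 pb1] <-] [pc [pc0 pc1] <-] h1 h2 h3 hs.
exists (al *: pa + be *: pb + ga *: pc).
  split.
    by move=> i; rewrite !mxE !addr_ge0 ?mulr_ge0.
  under eq_bigr do rewrite !mxE.
  by rewrite !big_split /= -!mulr_sumr pa1 pb1 pc1 !mulr1.
by rewrite !mulmxDr !scalemxAr.
Qed.

Lemma conv_comb2 a b (t : R) : conv a -> conv b -> 0 <= t <= 1 ->
  conv (t *: a + (1 - t) *: b).
Proof.
move=> ca cb /andP [t0 t1].
have := conv_comb3 (al:=t) (be:=1 - t) (ga:=0) ca cb ca t0 _ (lexx 0).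
rewrite scale0r !addr0; apply; last by ring.
by rewrite subr_ge0.
Qed.

Lemma simplex_delta j : simplex n (delta_mx j 0 : 'cV[R]_n).
Proof.
split; first by move=> i; rewrite mxE ler0n.
rewrite (bigD1 j) //= mxE !eqxx /= big1 ?addr0 // => i /negbTE h.
by rewrite mxE h.
Qed.

Lemma conv_col j : conv (col j A).
Proof. by exists (delta_mx j 0); [apply: simplex_delta | rewrite colE]. Qed.

Definition Fy (y : 'cV[R]_m) : set 'cV[R]_m :=
  [set v | conv v /\ exists2 s : R, 0 < s & conv (y + s *: (y - v))].

Lemma Fy_self y : conv y -> Fy y y.
Proof. by move=> cy; split => //; exists 1 => //; rewrite subrr scaler0 addr0. Qed.

Lemma Fy_ext y a b (t : R) : conv y -> conv a -> conv b -> 0 < t < 1 ->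
  Fy y (t *: a + (1 - t) *: b) -> Fy y a.
Proof.
move=> cy ca cb /andP [t0 t1] [cv [s s0 cw]].
split => //.
exists (t * s / (1 + s)); first by rewrite !divr_gt0 ?mulr_gt0 ?addr_gt0.
have -> : y + t * s / (1 + s) *: (y - a) =
   (s * t / (1 + s)) *: y + (1 / (1 + s)) *: (y + s *: (y - (t *: a + (1 - t) *: b)))
   + (s * (1 - t) / (1 + s)) *: b.
  apply/matrixP => i j; rewrite !mxE; field.
  by rewrite gt_eqF // addr_gt0.
apply: conv_comb3 => //.
- by rewrite !divr_ge0 ?mulr_ge0 ?addr_ge0 // ltW.
- by rewrite !divr_ge0 ?mulr_ge0 ?addr_ge0 // ltW.
- apply: divr_ge0; [apply: mulr_ge0; [exact: ltW | by rewrite subr_ge0 ltW] | by rewrite addr_ge0 // ltW].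
- field; by rewrite gt_eqF // addr_gt0.
Qed.

Lemma Fy_face y : conv y -> is_face conv (Fy y).
Proof.
move=> cy; split.
- by move=> v [].
- move=> v1 v2 t [c1 [s1 s10 w1]] [c2 [s2 s20 w2]] t01.
  split; first exact: conv_comb2.
  set s := Num.min s1 s2.
  have s0 : 0 < s by rewrite lt_min s10 s20.
  have hs1 : s <= s1 by rewrite ge_min lexx.
  have hs2 : s <= s2 by rewrite ge_min lexx orbT.
  exists s => //.
  have e1 : conv (y + s *: (y - v1)).
    have -> : y + s *: (y - v1) = (s / s1) *: (y + s1 *: (y - v1)) + (1 - s / s1) *: y.
      apply/matrixP => i j; rewrite !mxE; field; by rewrite gt_eqF.
    apply: conv_comb2 => //; apply/andP; split; [by rewrite divr_ge0 // ltW | by rewrite ler_pdivrMr // mul1r].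
  have e2 : conv (y + s *: (y - v2)).
    have -> : y + s *: (y - v2) = (s / s2) *: (y + s2 *: (y - v2)) + (1 - s / s2) *: y.
      apply/matrixP => i j; rewrite !mxE; field; by rewrite gt_eqF.
    apply: conv_comb2 => //; apply/andP; split; [by rewrite divr_ge0 // ltW | by rewrite ler_pdivrMr // mul1r].
  have -> : y + s *: (y - (t *: v1 + (1 - t) *: v2)) =
     t *: (y + s *: (y - v1)) + (1 - t) *: (y + s *: (y - v2)).
    by apply/matrixP => i j; rewrite !mxE; ring.
  exact: conv_comb2.
- move=> a b t ca cb t01 F; split; first exact: Fy_ext F.
  apply: (@Fy_ext y b a (1 - t)) => //.
    by move: t01 => /andP [h1 h2]; apply/andP; split; rewrite ?subr_gt0 // ltrBlDr ltrDl.
  have -> : (1 - t) *: b + (1 - (1 - t)) *: a = t *: a + (1 - t) *: b by apply/matrixP => i j; rewrite !mxE; ring.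
  exact: F.
Qed.

End Conv.


Section Sums.
Variable R : realType.
Variable n : nat.
Lemma sumD (u v : 'cV[R]_n) : \sum_i (u + v) i 0 = \sum_i u i 0 + \sum_i v i 0.
Proof. by rewrite -big_split; apply: eq_bigr => i _; rewrite mxE. Qed.
Lemma sumN (u : 'cV[R]_n) : \sum_i (- u) i 0 = - \sum_i u i 0.
Proof. by rewrite -sumrN; apply: eq_bigr => i _; rewrite mxE. Qed.
Lemma sumB (u v : 'cV[R]_n) : \sum_i (u - v) i 0 = \sum_i u i 0 - \sum_i v i 0.
Proof. by rewrite sumD sumN. Qed.
Lemma sumZ a (u : 'cV[R]_n) : \sum_i (a *: u) i 0 = a * \sum_i u i 0.
Proof. by rewrite mulr_sumr; apply: eq_bigr => i _; rewrite mxE. Qed.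
End Sums.

Section Improve.
Variable R : realType.
Variables m n : nat.
Variable A : 'M[R]_(m, n).

Lemma improve u x z (lam : R) p q :
  simplex n x -> Zset A u z ->
  (forall z', Zset A u z' -> l1 (x - z) <= l1 (x - z')) ->
  0 < lam -> simplex n p -> simplex n q -> (forall i, p i 0 = 0 \/ q i 0 = 0) ->
  x - z = lam *: (p - q) -> l1 (x - z) = 2 * lam ->
  forall j, Fy A (A *m q) (col j A) -> p j 0 = 0.
Proof.
move=> sx [sz Az] Hmin lam0 sp sq hd exz lxz j [_ [s s0 [r sr Ar]]].
have pj0 := sp.1 j.
apply/eqP; apply: contraT => pjn0.
have pj : 0 < p j 0 by rewrite lt_neqAle eq_sym pjn0 pj0.
have qj : q j 0 = 0 by case: (hd j) => // h; rewrite h eqxx in pjn0.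
have pj1 := simplex_le1 j sp; move/andP: pj1 => [_ pj1].
have s1 : 0 < 1 + s by rewrite addr_gt0.
set tau := lam * p j 0 / (1 + s).
have tau0 : 0 < tau by rewrite /tau !divr_gt0 ?mulr_gt0.
have taus : tau * (1 + s) = lam * p j 0 by rewrite /tau divfK // gt_eqF.
set e : 'cV[R]_n := delta_mx j 0.
set g := s *: e + r - (1 + s) *: q.
set z' := z + tau *: g.
have coord i : x i 0 - z i 0 = lam * (p i 0 - q i 0).
  by have := congr1 (fun M : 'cV[R]_n => M i 0) exz; rewrite !mxE.
have Ag : A *m g = 0.
  rewrite /g !mulmxDr mulmxN -!scalemxAr Ar /e -colE.
  by apply/matrixP => a b; rewrite !mxE; ring.
have Zz' : Zset A u z'.
  split; last by rewrite /z' mulmxDr -scalemxAr Ag scaler0 addr0.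
  split.
    move=> i; rewrite /z' /g !mxE.
    have r0 := sr.1 i; have q0 := sq.1 i; have z0 := sz.1 i; have x0 := sx.1 i.
    have ei : 0 <= ((i == j) && (0 == 0 :> 'I_1))%:R :> R by rewrite ler0n.
    have hq : lam * p j 0 * q i 0 <= z i 0.
      case: (hd i) => h.
        have := coord i; rewrite h => ci.
        apply: (@le_trans _ _ (lam * q i 0)).
          by rewrite -mulrA ler_pM2l // ler_piMl.
        lra.
      by rewrite h mulr0.
    rewrite -taus in hq.
    have : 0 <= tau * (s * ((i == j) && (0 == 0 :> 'I_1))%:R) by apply: mulr_ge0; [exact: ltW | apply: mulr_ge0; [exact: ltW | exact: ler0n]].
    have : 0 <= tau * r i 0 by rewrite mulr_ge0 // ltW.
    nra.
  rewrite /z' sumD sumZ /g sumB sumD !sumZ sz.2 sr.2 sq.2 (simplex_delta R j).2.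
  by ring.
have := Hmin _ Zz'; rewrite lxz.
have : l1 (x - z') <= 2 * lam - 2 * (tau * s).
  pose c := lam *: p - (tau * s) *: e + (lam - tau * (1 + s)) *: q + tau *: r.
  have -> : 2 * lam - 2 * (tau * s) = \sum_i c i 0.
    rewrite /c !sumD ?sumN !sumZ sp.2 sq.2 sr.2 (simplex_delta R j).2; by ring.
  apply: ler_sum => i _.
  rewrite /c /z' /g !mxE.
  have r0 := sr.1 i; have q0 := sq.1 i; have p0 := sp.1 i.
  have ci := coord i.
  have hT : tau * (1 + s) * q i 0 <= lam * q i 0.
    by rewrite taus -mulrA ler_pM2l // ler_piMl.
  have hR : 0 <= tau * r i 0 by rewrite mulr_ge0 // ltW.
  have hT0 : 0 <= tau * (1 + s) * q i 0 by rewrite mulr_ge0 // mulr_ge0 // ltW.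
  case: (eqVneq i j) => [eij|ij].
    subst i.
    rewrite eqxx /= qj.
    have hE : tau * s <= lam * p j 0.
      by rewrite -taus ler_pM2l // lerDr ler01.
    rewrite ?qj in ci.
    rewrite ler_norml; apply/andP; split; nra.
  rewrite ?(negbTE ij) /=.
  case: (hd i) => h.
    rewrite h in ci *.
    rewrite ler_norml; apply/andP; split; nra.
  rewrite h in ci *.
  have hp : 0 <= lam * p i 0 by rewrite mulr_ge0 // ltW.
  rewrite ler_norml; apply/andP; split; nra.
have : 0 < tau * s by rewrite mulr_gt0.
lra.
Qed.

End Improve.


Section Key.
Variable R : realType.
Variables m n : nat.
Variable N : 'cV[R]_m -> R.
Hypothesis HN : is_norm N.
Variable A : 'M[R]_(m, n).

Lemma distZ_ge0 x u : 0 <= distZ A x u.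
Proof. by apply: inf_ge0 => _ [z _ <-]; apply: l1_ge0. Qed.

Lemma set_dist_ge0 F G : 0 <= set_dist N F G.
Proof. by apply: inf_ge0 => _ [a [b [_ _ ->]]]; apply: N_ge0. Qed.

Lemma facial_dist_ge0 : 0 <= facial_dist N A.
Proof. by apply: inf_ge0 => _ [F [_ _ _ ->]]; apply: set_dist_ge0. Qed.

Lemma sum_simplexB (x z : 'cV[R]_n) : simplex n x -> simplex n z ->
  \sum_i (x - z) i 0 = 0.
Proof. by move=> [_ x1] [_ z1]; rewrite sumB x1 z1 subrr. Qed.

Lemma upper u x : conv_cols A u -> simplex n x ->
  N (A *m x - u) <= distZ A x u * diam N A / 2.
Proof.
move=> [z0 sz0 Az0] sx.
have ne : [set l1 (x - z) | z in Zset A u] !=set0.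
  by exists (l1 (x - z0)); exists z0.
have bnd z : Zset A u z -> N (A *m x - u) <= l1 (x - z) * diam N A / 2.
  move=> [sz <-]; rewrite -mulmxBr; apply: Ad_bound => //.
  exact: sum_simplexB.
have := diam_ge0 N A; rewrite le_eqVlt => /orP [/eqP d0|dpos].
  have := bnd z0 (conj sz0 Az0); by rewrite -d0 !mulr0 mul0r.
have hc : N (A *m x - u) * 2 / diam N A <= distZ A x u.
  apply: lb_le_inf => // _ [z Zz <-].
  rewrite ler_pdivrMr // -ler_pdivlMr //; exact: bnd.
have -> : N (A *m x - u) = (N (A *m x - u) * 2 / diam N A) * diam N A / 2.
  by field; rewrite gt_eqF.
by rewrite ler_pM2r // ler_pM2r.
Qed.

Lemma key u x : conv_cols A u -> simplex n x ->
  exists z, [/\ Zset A u z, distZ A x u = l1 (x - z) &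
    facial_dist N A * l1 (x - z) <= 2 * N (A *m x - u)].
Proof.
move=> cu sx.
have [z Zz Hmin] := Zmin x cu.
have dz : distZ A x u = l1 (x - z).
  apply/le_anti/andP; split.
    by apply: inf_le_ge0; [move=> _ [w _ <-]; apply: l1_ge0 | exists z].
  by apply: lb_le_inf; [exists (l1 (x - z)); exists z | move=> _ [w Zw <-]; apply: Hmin].
exists z; split => //.
case: (eqVneq (x - z) 0) => [e0|en0].
  rewrite e0 /l1 big1 ?mulr0 ?mulr_ge0 ?N_ge0 // => i _; by rewrite mxE normr0.
have [sz Az] := Zz.
have [lam [p [q [lam0 sp sq hd [exz lxz]]]]] := decomp (sum_simplexB sx sz) en0.
set y := A *m q.
have cy : conv_cols A y by exists q.
have hF := improve sx Zz Hmin lam0 sp sq hd exz lxz.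
set F := Fy A y.
have faceF := Fy_face cy.
have Fy0 : F y by apply: Fy_self.
have [j pj] : exists j, p j 0 != 0.
  apply/not_existsP => H; have := sp.2; rewrite big1 => [/eqP|i _].
    by rewrite eq_sym oner_eq0.
  by have := H i; case: eqP.
have Fne : F <> conv_cols A.
  move=> FE; have : F (col j A) by rewrite FE; apply: conv_col.
  by move/hF => h; rewrite h eqxx in pj.
have cop : conv_out A F (A *m p) by exists p => //; split => // k /hF.
have h1 : set_dist N F (conv_out A F) <= N (y - A *m p).
  apply: inf_le_ge0; first by move=> _ [a [b [_ _ ->]]]; apply: N_ge0.
  by exists y, (A *m p).
have h2 : facial_dist N A <= set_dist N F (conv_out A F).
  apply: inf_le_ge0; first by move=> _ [G [_ _ _ ->]]; apply: set_dist_ge0.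
  exists F; split => //.
  by move=> F0; rewrite F0 in Fy0.
have -> : A *m x - u = lam *: (A *m p - y).
  by rewrite -Az -mulmxBr exz -scalemxAr mulmxBr.
rewrite (NZ HN) gtr0_norm // lxz (NB HN).
have := le_trans h2 h1 => h.
nra.

Qed.

End Key.


Section Comb.
Variable R : realType.
Variables m n : nat.
Variable A : 'M[R]_(m, n).

Lemma simplex_one (p : 'cV[R]_n) j : simplex n p -> p j 0 = 1 -> p = delta_mx j 0.
Proof.
move=> [p0 p1] pj.
have h : \sum_(i | i != j) p i 0 = 0.
  by move: p1; rewrite (bigD1 j) //= pj => h; lra.
move/eqP: h; rewrite psumr_eq0 => [/allP h|i _]; last exact: p0.
apply/matrixP => i k; rewrite (ord1 k) mxE /=.
case: (eqVneq i j) => [->|ij]; first by rewrite pj.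
by apply/eqP; have := h i (mem_index_enum _); rewrite ij.
Qed.

Lemma split_col (p : 'cV[R]_n) j : simplex n p -> p j 0 < 1 ->
  exists2 r, simplex n r &
   [/\ r j 0 = 0, forall i, p i 0 = 0 -> r i 0 = 0 &
       A *m p = p j 0 *: col j A + (1 - p j 0) *: (A *m r)].
Proof.
move=> sp pj1.
have d0 : 1 - p j 0 != 0 by rewrite subr_eq0 eq_sym lt_eqF.
have d0' : 0 < 1 - p j 0 by rewrite subr_gt0.
pose r := (1 - p j 0)^-1 *: (p - p j 0 *: delta_mx j 0).
exists r.
  split.
    move=> i; rewrite !mxE; apply: mulr_ge0; first by rewrite invr_ge0 ltW.
    case: (eqVneq i j) => [->|ij]; first by rewrite eqxx /= mulr1 subrr.
    by rewrite ?(negbTE ij) /= mulr0 subr0; apply: sp.1.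
  rewrite sumZ sumB sumZ sp.2 (simplex_delta R j).2 mulr1 mulVf //.
split.
- by rewrite !mxE eqxx /= mulr1 subrr mulr0.
- move=> i pi; rewrite !mxE pi; case: (eqVneq i j) => [ij|ij].
    by rewrite -ij pi mul0r subrr mulr0.
  by rewrite ?(negbTE ij) /= mulr0 subrr mulr0.
- rewrite /r -scalemxAr scalerA mulfV // scale1r mulmxBr -scalemxAr -colE.
  by rewrite addrC subrK.
Qed.

Lemma simplex_nz (p : 'cV[R]_n) : simplex n p -> exists j, p j 0 != 0.
Proof.
move=> sp; apply/not_existsP => H; have := sp.2; rewrite big1 => [/eqP|i _].
  by rewrite eq_sym oner_eq0.
by have := H i; case: eqP.
Qed.

Definition supp (p : 'cV[R]_n) : {set 'I_n} := [set j | p j 0 != 0]%SET.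

Lemma comb_in (F : set 'cV[R]_m) (p : 'cV[R]_n) :
  convex_subset F -> simplex n p ->
  (forall j, p j 0 != 0 -> F (col j A)) -> F (A *m p).
Proof.
move=> cF.
suff H : forall k (p : 'cV[R]_n), (#|supp p| <= k)%N -> simplex n p ->
  (forall j, p j 0 != 0 -> F (col j A)) -> F (A *m p) by apply: H.
elim=> [|k IH] {}p.
  move=> hk sp _; exfalso; have [j pj] := simplex_nz sp.
  by move: hk; rewrite /supp (cardsD1 j) inE pj.
move=> hk sp hF.
have [j pj] := simplex_nz sp.
have pj1 := simplex_le1 j sp; move/andP: pj1 => [pj0 pj1].
move: pj1; rewrite le_eqVlt => /orP [/eqP e1|lt1].
  by rewrite (simplex_one sp e1) -colE; apply: hF; rewrite e1 oner_eq0.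
have [r sr [rj rz ->]] := split_col sp lt1.
have Fr : F (A *m r).
  apply: IH => //; last first.
    move=> i ri; apply: hF; apply: contra ri => /eqP h; apply/eqP; exact: rz h.
  have sub : supp r \subset supp p :\ j.
    apply/fintype.subsetP => i; rewrite !inE => ri; apply/andP; split.
      by apply: contra ri => /eqP ->; rewrite rj.
    by apply: contra ri => /eqP h; apply/eqP; exact: rz h.
  rewrite -ltnS; apply: leq_ltn_trans (subset_leq_card sub) _.
  rewrite (cardsD1 j (supp p)) inE pj /= in hk.
  by rewrite ltnS.
apply: cF => //; first by apply: hF.
by rewrite pj0 ltW.
Qed.

Lemma face_col (F : set 'cV[R]_m) (p : 'cV[R]_n) j :
  is_face (conv_cols A) F -> simplex n p -> F (A *m p) -> p j 0 != 0 -> F (col j A).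
Proof.
move=> [sF _ ext] sp Fp pj.
have pj1 := simplex_le1 j sp; move/andP: pj1 => [pj0 pj1].
move: pj1; rewrite le_eqVlt => /orP [/eqP e1|lt1].
  by move: Fp; rewrite (simplex_one sp e1) -colE.
have [r sr [_ _ e]] := split_col sp lt1.
rewrite e in Fp.
have := ext _ _ (p j 0) (conv_col A j) _ _ Fp; case.
  by exists r.
  by rewrite lt_neqAle eq_sym pj pj0.
by [].
Qed.

End Comb.


Section Sep.
Variable R : realType.
Variables m n : nat.
Variable N : 'cV[R]_m -> R.
Hypothesis HN : is_norm N.
Variable A : 'M[R]_(m, n).

Definition suppin (S : {set 'I_n}) (p : 'cV[R]_n) := forall i, i \notin S -> p i 0 = 0.

Lemma N_lip : continuous (fun r : 'rV[R]_n => N (A *m r^T)).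
Proof.
apply: (@lip_cont _ _ _ (\sum_j N (col j A) + 1)).
  by rewrite ltr_wpDl // sumr_ge0 // => j _; apply: N_ge0.
move=> a b.
have h : `|N (A *m a^T) - N (A *m b^T)| <= N (A *m (a - b)^T).
  rewrite (_ : A *m (a - b)^T = A *m a^T - A *m b^T); last by rewrite raddfB mulmxBr.
  set v := A *m a^T; set w := A *m b^T.
  have t1 : N v <= N w + N (v - w).
    by rewrite -{1}(subrK w v) addrC; apply: NT.
  have t2 : N w <= N v + N (v - w).
    by rewrite (NB HN) -{1}(subrK v w) addrC; apply: NT.
  rewrite ler_norml; apply/andP; split; lra.
apply: le_trans h _.
rewrite mulmx_sum_col; apply: le_trans (N_sum HN _ _ _) _.
rewrite mulrDl mul1r -[leLHS]addr0; apply: lerD; last by [].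
rewrite mulr_suml; apply: ler_sum => j _.
rewrite (NZ HN) mulrC; apply: ler_wpM2l; first exact: N_ge0.
rewrite mxE; exact: coord_le_norm.
Qed.

Lemma sep_pos (S : {set 'I_n}) : exists2 c : R, 0 < c &
  ((forall p q, simplex n p -> simplex n q -> suppin S p -> suppin (~: S) q ->
      A *m p != A *m q) ->
   forall p q, simplex n p -> simplex n q -> suppin S p -> suppin (~: S) q ->
      c <= N (A *m p - A *m q)).
Proof.
case: (pselect (forall p q, simplex n p -> simplex n q -> suppin S p -> suppin (~: S) q ->
      A *m p != A *m q)) => H; last by exists 1.
pose K := [set r : 'rV[R]_n | (forall i, if i \in S then 0 <= r 0 i else r 0 i <= 0) /\
   \sum_i (if i \in S then 1 else 0) * r 0 i = 1 /\
   \sum_i (if i \in S then 0 else -1) * r 0 i = 1].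
have inK p q : simplex n p -> simplex n q -> suppin S p -> suppin (~: S) q -> K (p - q)^T.
  move=> sp sq hp hq; split; last split.
  - move=> i; rewrite !mxE; case: ifP => iS.
      by rewrite hq ?inE ?iS // subr0; apply: sp.1.
    by rewrite hp ?iS // sub0r oppr_le0; apply: sq.1.
  - rewrite -[RHS]sp.2; apply: eq_bigr => i _; rewrite !mxE; case: ifP => iS.
      by rewrite hq ?inE ?iS // subr0 mul1r.
    by rewrite hp ?iS // mul0r.
  - rewrite -[RHS]sq.2; apply: eq_bigr => i _; rewrite !mxE; case: ifP => iS.
      by rewrite hq ?inE ?iS // mul0r.
    by rewrite hp ?iS // sub0r mulNr mulrN opprK mul1r.
case: (pselect (K !=set0)) => K0; last first.
  exists 1 => // _ p q sp sq hp hq; exfalso; apply: K0; exists (p - q)^T; exact: inK.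
have Kc : closed K.
  have -> : K = (\bigcap_(i in setT) (if i \in S then [set r : 'rV[R]_n | 0 <= r 0 i]
                                           else [set r | r 0 i <= 0])) `&`
     [set r | \sum_i (if i \in S then 1 else 0) * r 0 i = 1] `&`
     [set r | \sum_i (if i \in S then 0 else -1) * r 0 i = 1].
    apply/seteqP; split => r /=.
      move=> [h1 [h2 h3]]; split => //; split => //.
      by move=> i _; have := h1 i; case: ifP.
    move=> [[h1 h2] h3]; split; last by [].
    by move=> i; have := h1 i I; case: ifP.
  apply: closedI; first apply: closedI.
  - apply: closed_bigI => i _; case: ifP => _; [exact: closed_coord_ge | exact: closed_coord_le].
  - exact: closed_lin_eq.
  - exact: closed_lin_eq.
have Kb : forall r, K r -> forall i, `|r 0 i| <= 1.
  move=> r [h1 [h2 h3]] i.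
  have nn1 k : 0 <= (if k \in S then 1 else 0) * r 0 k.
    by have := h1 k; case: ifP => _ h; rewrite ?mul1r ?mul0r.
  have nn2 k : 0 <= (if k \in S then 0 else -1) * r 0 k.
    by have := h1 k; case: ifP => _ h; rewrite ?mul0r // mulN1r oppr_ge0.
  have := h1 i; case: ifP => iS hi.
    rewrite ger0_norm //; rewrite -h2 (bigD1 i) //= iS mul1r lerDl.
    by apply: sumr_ge0 => k _; apply: nn1.
  rewrite ler0_norm //; rewrite -h3 (bigD1 i) //= iS mulN1r lerDl.
  by apply: sumr_ge0 => k _; apply: nn2.
have [r Kr Hr] := compact_min K0 Kc Kb N_lip.
exists (N (A *m r^T)).
  pose p := \col_i (if i \in S then r 0 i else 0).
  pose q := \col_i (if i \in S then 0 else - r 0 i).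
  have [h1 [h2 h3]] := Kr.
  have sp : simplex n p.
    split; first by move=> i; rewrite mxE; have := h1 i; case: ifP.
    rewrite -h2; apply: eq_bigr => i _; rewrite mxE; case: ifP; rewrite ?mul1r ?mul0r //.
  have sq : simplex n q.
    split; first by move=> i; rewrite mxE; have := h1 i; case: ifP => // _; rewrite oppr_ge0.
    rewrite -h3; apply: eq_bigr => i _; rewrite mxE; case: ifP; rewrite ?mul0r ?mulN1r //.
  have hp : suppin S p by move=> i /negbTE iS; rewrite mxE iS.
  have hq : suppin (~: S) q by move=> i; rewrite inE negbK => iS; rewrite mxE iS.
  have e : r^T = p - q.
    apply/matrixP => i k; rewrite (ord1 k) !mxE; case: ifP => _; by rewrite ?subr0 ?sub0r ?opprK.
  have N0eq : forall x, N x = 0 -> x = 0 by case: HN.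
  rewrite lt_neqAle N_ge0 // andbT eq_sym; apply/eqP => /N0eq /eqP.
  by rewrite e mulmxBr subr_eq0; apply/negP; apply: H.
move=> _ p q sp sq hp hq.
have := Hr _ (inK _ _ sp sq hp hq); by rewrite trmxK mulmxBr.
Qed.

End Sep.


Lemma fin_min (R : realType) (T : finType) (Q : T -> R -> Prop) :
  (forall t c c', 0 < c' <= c -> Q t c -> Q t c') ->
  (forall t, exists2 c, 0 < c & Q t c) -> exists2 c, 0 < c & forall t, Q t c.
Proof.
move=> mono ex.
suff H : forall s : seq T, exists2 c, 0 < c & forall t, t \in s -> Q t c.
  have [c c0 Hc] := H (enum T); exists c => // t; apply: Hc; by rewrite mem_enum.
elim=> [|a s [c c0 Hc]]; first by exists 1.
have [d d0 Hd] := ex a.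
exists (Num.min c d); first by rewrite lt_min c0 d0.
move=> t; rewrite inE => /orP [/eqP ->|ts].
  by apply: mono Hd; rewrite lt_min c0 d0 /= ge_min lexx orbT.
by apply: mono (Hc _ ts); rewrite lt_min c0 d0 /= ge_min lexx.
Qed.

Section Phi.
Variable R : realType.
Variables m n : nat.
Variable N : 'cV[R]_m -> R.
Hypothesis HN : is_norm N.
Variable A : 'M[R]_(m, n).

Lemma face_bound : exists2 c, 0 < c & forall F, is_face (conv_cols A) F -> F <> set0 ->
  F <> conv_cols A -> c <= set_dist N F (conv_out A F).
Proof.
pose Q := fun (S : {set 'I_n}) (c : R) => (forall p q, simplex n p -> simplex n q ->
      suppin S p -> suppin (~: S) q -> A *m p != A *m q) ->
   forall p q, simplex n p -> simplex n q -> suppin S p -> suppin (~: S) q ->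
      c <= N (A *m p - A *m q).
have mono : forall S c c', 0 < c' <= c -> Q S c -> Q S c'.
  by move=> S c1 c' /andP [_ le] H1 H2 p q sp sq hp hq; apply: le_trans le (H1 H2 p q sp sq hp hq).
have [c c0 Hc] := fin_min mono (sep_pos HN A).
exists c => // F fF Fne Fnc.
have [sF cF ext] := fF.
pose S : {set 'I_n} := [set j | `[< F (col j A) >]]%SET.
have inS j : (j \in S) = `[< F (col j A) >] by rewrite inE.
have HS : forall p q, simplex n p -> simplex n q -> suppin S p -> suppin (~: S) q ->
    A *m p != A *m q.
  move=> p q sp sq hp hq; apply/eqP => epq.
  have Fp : F (A *m p).
    apply: comb_in cF sp _ => j pj; apply/asboolP; rewrite -inS.
    by apply: contraR pj => /hp ->.
  have [i qi] := simplex_nz sq.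
  have : F (col i A) by apply: face_col fF sq _ qi; rewrite -epq.
  move/asboolP; rewrite -inS => iS.
  by move: qi; rewrite hq ?eqxx // inE negbK.
have Hpq := Hc S HS.
have [i iF] : exists i, ~ F (col i A).
  apply/not_existsP => H; apply: Fnc; apply/seteqP; split => // v [p sp <-].
  apply: comb_in cF sp _ => j _; have := H j; by apply: contrapT.
apply: lb_le_inf.
  have [a Fa] : exists a, F a by apply/set0P/eqP.
  exists (N (a - col i A)), a, (col i A); split => //.
  exists (delta_mx i 0); last by rewrite colE.
  split; first exact: simplex_delta.
  move=> j Fj; rewrite mxE; case: (eqVneq j i) => [eji|//].
  by rewrite eji in Fj.
move=> _ [a [b [Fa [q [sq hq] <-] ->]]].
have [p sp ep] := sF _ Fa; subst a.
apply: Hpq => //.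
  move=> j; rewrite inS => /asboolPn jF; apply/eqP; apply: contraT => pj.
  by exfalso; apply: jF; apply: face_col fF sp Fa pj.
move=> j; rewrite inE negbK inS => /asboolP Fj; exact: hq.
Qed.

Lemma face_exists : (exists i j, col i A != col j A) ->
  exists F, [/\ is_face (conv_cols A) F, F <> set0 & F <> conv_cols A].
Proof.
move=> [i0 [j0 ij]].
have [k hk] : exists k, A k i0 != A k j0.
  apply/not_existsP => H; move: ij; apply/negP; rewrite negbK; apply/eqP.
  apply/matrixP => a b; rewrite (ord1 b) !mxE; have := H a; by case: eqP.
set jm := [arg min_(j < i0) A k j]%O.
have hm : forall j, A k jm <= A k j.
  by move=> j; rewrite /jm; case: arg_minP => // l _; apply.
set mu := A k jm.
have geconv v : conv_cols A v -> mu <= v k 0.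
  move=> [p [p0 p1] <-]; rewrite mxE.
  apply: (@le_trans _ _ (\sum_j mu * p j 0)); first by rewrite -mulr_sumr p1 mulr1.
  by apply: ler_sum => j _; apply: ler_wpM2r; [apply: p0 | apply: hm].
exists [set v | conv_cols A v /\ v k 0 = mu]; split.
- split; first by move=> v [].
  + move=> v1 v2 t [c1 e1] [c2 e2] t01; split; first exact: conv_comb2.
    by rewrite !mxE e1 e2; ring.
  + move=> a b t ca cb /andP [t0 t1] [_ e].
    have ha := geconv _ ca; have hb := geconv _ cb.
    move: e; rewrite !mxE => e.
    have : a k 0 = mu /\ b k 0 = mu.
      split; apply/eqP; rewrite eq_le ?ha ?hb andbT; nra.
    by move=> [ea eb].
- by move/seteqP => [H _]; have := H (col jm A); apply => //; split; [apply: conv_col | rewrite mxE].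
- move/seteqP => [_ H].
  have h1 := H _ (conv_col A i0); have h2 := H _ (conv_col A j0).
  move: h1 h2 => [_ +] [_ +]; rewrite !mxE => e1 e2.
  by move: hk; rewrite e1 e2 eqxx.
Qed.

Lemma facial_pos : (exists i j, col i A != col j A) -> 0 < facial_dist N A.
Proof.
move=> ij.
have [c c0 Hc] := face_bound.
have [F [fF F0 Fc]] := face_exists ij.
apply: lt_le_trans c0 _.
apply: lb_le_inf.
  by exists (set_dist N F (conv_out A F)), F.
by move=> _ [G [fG G0 Gc ->]]; apply: Hc.
Qed.

End Phi.


Unset Implicit Arguments.
Theorem corollary2 (R : realType) (m n : nat) (N : 'cV[R]_m -> R)
  (A : 'M[R]_(m, n)) (f : 'cV[R]_m -> \bar R) (Lf muf : R) :
  is_norm N ->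
  (exists i j, col i A != col j A) ->
  convex_ext f ->
  differentiable_on f (conv_cols A) ->
  0 < Lf -> 0 <= muf ->
  smooth_on N f (conv_cols A) Lf ->
  strongly_convex_on N f (conv_cols A) muf ->
  [/\ (LfA A f <= (Lf * diam N A ^+ 2 / 4)%:E)%E,
      ((muf * facial_dist N A ^+ 2 / 4)%:E <= mufA A f)%E &
      (0 < muf ->
         fine (LfA A f) / fine (mufA A f)
           <= Lf / muf * (diam N A ^+ 2 / facial_dist N A ^+ 2))].
Proof.
move=> HN ij _ _ Lf0 muf0 sm sc.
have dg0 := diam_ge0 N A.
have Phi0 := facial_dist_ge0 HN A.
have Ppos := facial_pos HN ij.
have up : (LfA A f <= (Lf * diam N A ^+ 2 / 4)%:E)%E.
  apply: ge_ereal_sup => _ [u [x [cu sx nZ ->]]].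
  rewrite lee_fin.
  have cAx : conv_cols A (A *m x) by exists x.
  have hs := sm _ _ cu cAx.
  have hN := upper HN cu sx.
  have Nn := N_ge0 HN (A *m x - u).
  have d0 := distZ_ge0 A x u.
  set D := fr f (A *m x) - fr f u - grad_pair f u (A *m x - u).
  have hD : 2 * D <= Lf * N (A *m x - u) ^+ 2 by rewrite /D; lra.
  have hN2 : N (A *m x - u) ^+ 2 <= (distZ A x u * diam N A / 2) ^+ 2.
    by rewrite ler_sqr // ?nnegrE // mulr_ge0 // mulr_ge0.
  move: d0; rewrite le_eqVlt => /orP [/eqP <-|dpos].
    rewrite expr0n /= invr0 mulr0; apply: divr_ge0 => //; apply: mulr_ge0; [exact: ltW | exact: exprn_ge0].
  rewrite ler_pdivrMr ?exprn_gt0 //.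
  apply: le_trans hD _.
  apply: le_trans (ler_wpM2l (ltW Lf0) hN2) _.
  by rewrite !expr2; rewrite le_eqVlt; apply/orP; left; apply/eqP; field.
have low : ((muf * facial_dist N A ^+ 2 / 4)%:E <= mufA A f)%E.
  apply: le_ereal_inf_tmp => _ [u [x [cu sx nZ ->]]].
  rewrite lee_fin.
  have cAx : conv_cols A (A *m x) by exists x.
  have hs := sc _ _ cu cAx.
  have [z [Zz dz hk]] := key HN cu sx.
  have Nn := N_ge0 HN (A *m x - u).
  set D := fr f (A *m x) - fr f u - grad_pair f u (A *m x - u).
  have hD : muf * N (A *m x - u) ^+ 2 <= 2 * D by rewrite /D; lra.
  have dpos : 0 < distZ A x u.
    rewrite lt_neqAle distZ_ge0 andbT; apply/eqP => e0.
    apply: nZ; have : x - z = 0 by apply: l1_eq0; rewrite -dz -e0.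
    by move/eqP; rewrite subr_eq0 => /eqP ->.
  rewrite -dz in hk.
  rewrite ler_pdivlMr ?exprn_gt0 //.
  apply: le_trans hD.
  have h2 : (facial_dist N A * distZ A x u) ^+ 2 <= (2 * N (A *m x - u)) ^+ 2.
    by rewrite ler_sqr // ?nnegrE ?mulr_ge0 // ltW.
  move: h2; rewrite !exprMn => h2.
  have h4 : facial_dist N A ^+ 2 * distZ A x u ^+ 2 / 4 <= N (A *m x - u) ^+ 2.
    rewrite ler_pdivrMr //; move: h2.
    by rewrite (_ : (2 : R) ^+ 2 = 4) 1?[_ * 4]mulrC //; rewrite expr2; ring.
  have h5 := ler_wpM2l muf0 h4.
  apply: le_trans h5.
  by rewrite le_eqVlt; apply/orP; left; apply/eqP; field.
split => // mupos.
set U := Lf * diam N A ^+ 2 / 4.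
set L' := muf * facial_dist N A ^+ 2 / 4.
have U0 : 0 <= U by rewrite /U mulr_ge0 // mulr_ge0 // ?exprn_ge0 // ltW.
have L0 : 0 < L' by rewrite /L' mulr_gt0 // mulr_gt0 // exprn_gt0.
have ha : fine (LfA A f) <= U.
  move: up; case: (LfA A f) => [r| |] //=; by rewrite lee_fin.
have hb : fine (mufA A f) = 0 \/ L' <= fine (mufA A f).
  move: low; case: (mufA A f) => [r| |] //=; first by rewrite lee_fin; right.
  by left.
have -> : Lf / muf * (diam N A ^+ 2 / facial_dist N A ^+ 2) = U / L'.
  rewrite /U /L'; field; apply/andP; split; rewrite ?gt_eqF // ?exprn_gt0 //.
case: hb => [->|hb]; first by rewrite invr0 mulr0 divr_ge0 // ltW.
have b0 : 0 < fine (mufA A f) by apply: lt_le_trans hb.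
apply: (@le_trans _ _ (U / fine (mufA A f))).
  by rewrite ler_pM2r ?invr_gt0.
by apply: ler_wpM2l => //; rewrite lef_pV2 ?posrE.
Qed.
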